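(* Let $S$ be a finite alphabet and let $U,V,W$ be finite sets of words over $S$. Let $L$ be a language over $S$ such that every element of $L$ has the form $ac^nb$ with $a\in U$, $b\in V$, $c\in W$, $n\ge 0$. Then $L$ is a regular language if and only if for every $a\in U$, $b\in V$, $c\in W$ the set $$N_{a,b,c}=\{n\in\mathbb Z_{\ge 0}\mid ac^nb\in L\}$$ is the union of a finite set and finitely many one-sided arithmetic progressions $\{\alpha+t\beta\mid t\ge 0\}$.
   Context: A regular language is one recognized by a finite automaton (equivalently, described by a regular expression). *)

(* Defs.v *)
From mathcomp Require Import all_boot.
Set Implicit Arguments. Unset Strict Implicit. Unset Printing Implicit Defensive.

Record dfa (S : finType) := Dfa {
  dfa_state : finType;
  dfa_start : dfa_state;
  dfa_final : pred dfa_state;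
  dfa_trans : dfa_state -> S -> dfa_state }.

Definition dfa_accept (S : finType) (A : dfa S) (w : seq S) : bool :=
  @dfa_final S A (foldl (@dfa_trans S A) (@dfa_start S A) w).

Definition regular (S : finType) (L : seq S -> Prop) : Prop :=
  exists A : dfa S, forall w, L w <-> dfa_accept A w.

Definition wpow (S : Type) (c : seq S) (n : nat) : seq S := flatten (nseq n c).

Definition fin_union_progressions (N : nat -> Prop) : Prop :=
  exists (F : seq nat) (P : seq (nat * nat)),
    forall n, N n <-> (n \in F \/ exists2 p, p \in P & exists t, n = p.1 + t * p.2).

(* Main.v *)
From Stdlib Require Import Classical ClassicalEpsilon.
Require Import Defs.
From mathcomp Require Import all_boot zify.
Set Implicit Arguments. Unset Strict Implicit.

Definition dec (P : Prop) : bool := if excluded_middle_informative P then true else false.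
Lemma decP P : reflect P (dec P).
Proof. by rewrite /dec; case: excluded_middle_informative => h; constructor. Qed.
Lemma dec_ext P Q : (P <-> Q) -> dec P = dec Q.
Proof. by move=> e; apply/idP/idP => /decP h; apply/decP; apply e. Qed.

Section Aux.
Variable S : finType.
Implicit Types (a b c d u v w : seq S).

Lemma catI a u v : a ++ u = a ++ v -> u = v.
Proof. by elim: a => //= z a IH [] /IH. Qed.

Lemma wpowS c n : wpow c n.+1 = c ++ wpow c n. Proof. by []. Qed.
Lemma wpowD c m n : wpow c (m + n) = wpow c m ++ wpow c n.
Proof. by elim: m => //= m IH; rewrite addSn !wpowS IH catA. Qed.
Lemma wpowM c t k : wpow c (t * k) = wpow (wpow c k) t.
Proof. by elim: t => //= t IH; rewrite mulSn wpowD IH. Qed.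
Lemma wpow_nil n : wpow ([::] : seq S) n = [::].
Proof. by elim: n. Qed.

Definition fres (L : seq S -> Prop) := exists (Q : finType) (R : Q -> seq S -> Prop),
  forall u, exists q, forall w, L (u ++ w) <-> R q w.

Lemma fres_regular L : fres L -> regular L.
Proof.
case=> Q [R HR].
pose g u : option Q := [pick q | dec (forall w, L (u ++ w) <-> R q w)].
have g_some u : exists q, g u = Some q /\ forall w, L (u ++ w) <-> R q w.
  rewrite /g; case: pickP => [q /decP Hq|H]; first by exists q.
  by case: (HR u) => q Hq; move: (H q) => /decP [].
have g_ext u v : (forall w, L (u ++ w) <-> L (v ++ w)) -> g u = g v.
  move=> e; apply: eq_pick => q; apply: dec_ext; split=> h w.
    by rewrite -h; split => /e.
  by rewrite -h; split => /e.
have g_eq u v : g u = g v -> forall w, L (u ++ w) <-> L (v ++ w).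
  case: (g_some u) => q [-> Hq]; case: (g_some v) => q' [-> Hq'] [e] w; subst q'.
  by rewrite Hq Hq'.
pose rep (q : option Q) : seq S :=
  match excluded_middle_informative (exists u, g u = q) with
  | left h => proj1_sig (constructive_indefinite_description _ h)
  | right _ => [::] end.
have rep_spec u : g (rep (g u)) = g u.
  rewrite /rep; case: excluded_middle_informative => h; last by case: h; exists u.
  by case: constructive_indefinite_description.
exists (@Dfa S (option Q) (g [::]) (fun q => dec (L (rep q)))
          (fun q x => g (rep q ++ [:: x]))) => w.
have Hf : forall w, foldl (fun q x => g (rep q ++ [:: x])) (g [::]) w = g w.
  elim/last_ind => // s x IH; rewrite foldl_rcons IH -cats1; apply: g_ext => z.
  by rewrite -!catA; apply: g_eq; rewrite rep_spec.
rewrite /dfa_accept /= Hf; apply: (iff_trans _ (rwP (decP _))).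
by have := g_eq _ _ (rep_spec w) [::]; rewrite !cats0 => ->.
Qed.

Lemma fres_ext L L' : (forall w, L w <-> L' w) -> fres L -> fres L'.
Proof.
move=> e [Q [R H]]; exists Q, R => u; case: (H u) => q Hq; exists q => w.
by rewrite -e.
Qed.

Lemma fres0 : fres (fun _ => False).
Proof. by exists unit, (fun _ _ => False) => u; exists tt. Qed.

Lemma fresU L1 L2 : fres L1 -> fres L2 -> fres (fun w => L1 w \/ L2 w).
Proof.
move=> [Q1 [R1 H1]] [Q2 [R2 H2]].
exists (Q1 * Q2)%type, (fun q w => R1 q.1 w \/ R2 q.2 w) => u.
case: (H1 u) => q1 h1; case: (H2 u) => q2 h2; exists (q1, q2) => w /=.
by rewrite h1 h2.
Qed.

Lemma fres_big (X : eqType) (xs : seq X) (Lf : X -> seq S -> Prop) :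
  (forall x, x \in xs -> fres (Lf x)) ->
  fres (fun w => exists2 x, x \in xs & Lf x w).
Proof.
elim: xs => [|x xs IH] H.
  by apply: fres_ext fres0 => w; split => // [[]].
have H1 := H x (mem_head _ _).
have H2 : fres (fun w => exists2 x, x \in xs & Lf x w).
  by apply: IH => y hy; apply: H; rewrite inE hy orbT.
apply: (fres_ext _ (fresU H1 H2)).
move=> w; split.
    case=> [h|[y hy h]]; first by exists x => //; rewrite mem_head.
    by exists y => //; rewrite inE hy orbT.
  case=> y; rewrite inE => /orP [/eqP-> h|hy h]; first by left.
  by right; exists y.
Qed.

Definition Kl a d b w := exists t, w = a ++ wpow d t ++ b.

Lemma size_wpow_nil d t : size (wpow d t) = 0 -> t = 0 \/ d = [::].
Proof.
case: t => [|t]; first by left.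
by rewrite wpowS size_cat; case: d => //; right.
Qed.

Lemma K_reduce a d b (B := size a + size d + size b + 1) u :
  (exists w0, Kl a d b (u ++ w0)) ->
  exists t i, [/\ t <= B, i <= B &
    forall w, Kl a d b (u ++ w) <-> Kl a d b (take i (a ++ wpow d t ++ b) ++ w)].
Proof.
have [n] := ubnP (size u); elim: n u => // n IH u Hu [w0 [t0 E]].
case: (ltnP (size u) B) => hB.
  have Hu0 : u = take (size u) (a ++ wpow d t0 ++ b).
    by rewrite -E take_size_cat.
  case: (leqP t0 B) => ht0.
    exists t0, (size u); split => //; first by lia.
    by move=> w; rewrite -Hu0.
  case: (altP (d =P [::])) => [dn|dn].
    exists 0, (size u); split => //; first by lia.
    by move=> w; rewrite dn wpow_nil in Hu0 *; rewrite -Hu0.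
  exists B, (size u); split => //; first by lia.
  have -> : take (size u) (a ++ wpow d B ++ b) = u.
    have hd : 0 < size d by rewrite lt0n size_eq0.
    have szB : size u <= size (a ++ wpow d B).
      rewrite size_cat.
      have : B <= size (wpow d B).
        by elim: (B) => // k IHk; rewrite wpowS size_cat; lia.
      lia.
    have e0 : wpow d t0 = wpow d B ++ wpow d (t0 - B).
      by rewrite -wpowD subnKC // ltnW.
    rewrite {2}Hu0 e0.
    have -> : a ++ (wpow d B ++ wpow d (t0 - B)) ++ b
        = (a ++ wpow d B) ++ (wpow d (t0 - B) ++ b) by rewrite !catA.
    by rewrite catA takel_cat // [RHS]takel_cat.
  by [].
have hsz := congr1 size E; rewrite !size_cat in hsz.
case: t0 E hsz => [|t1] E hsz; first by rewrite /= in hsz; lia.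
rewrite wpowS size_cat in hsz.
have hd : 0 < size d.
  case: (posnP (size d)) => // /eqP; rewrite size_eq0 => /eqP dn.
  by move: hB hsz; rewrite /B dn wpow_nil /=; lia.
set v' := drop (size a + size d) u.
have Eu : u = a ++ d ++ v'.
  rewrite catA -{1}(cat_take_drop (size a + size d) u); congr (_ ++ _).
  have -> : take (size a + size d) u = take (size a + size d) (u ++ w0).
    by rewrite takel_cat //; move: hB; rewrite /B; lia.
  by rewrite E wpowS -(catA d) catA take_size_cat // size_cat.
have hv' : size v' = size u - (size a + size d) by rewrite size_drop.
have equiv : forall w, Kl a d b (u ++ w) <-> Kl a d b ((a ++ v') ++ w).
  move=> w; rewrite Eu; split.
    case=> [[|t] Et]; have hs := congr1 size Et; rewrite !size_cat /= in hs.
      by move: hB; rewrite /B; lia.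
    by exists t; move: Et; rewrite wpowS -!catA => /catI /catI ->.
  by case=> t Et; exists t.+1; move: Et; rewrite wpowS -!catA => /catI ->.
have hK : Kl a d b ((a ++ v') ++ w0) by apply/equiv; exists t1.+1.
have hlt : size (a ++ v') < n.
  by rewrite size_cat hv'; move: Hu hB; rewrite /B; lia.
have [t [i [ht hi Hti]]] := IH (a ++ v') hlt (ex_intro _ w0 hK).
by exists t, i; split => // w; rewrite equiv Hti.
Qed.

Lemma fresK a d b : fres (Kl a d b).
Proof.
pose B := size a + size d + size b + 1.
exists (option ('I_B.+1 * 'I_B.+1)),
  (fun (q : option ('I_B.+1 * 'I_B.+1)) w => match q with None => False
   | Some p => Kl a d b (take p.2 (a ++ wpow d p.1 ++ b) ++ w) end) => u.
case: (classic (exists w0, Kl a d b (u ++ w0))) => h.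
  have [t [i [ht hi Hti]]] := K_reduce h.
  by exists (Some (inord t, inord i)) => w /=; rewrite !inordK.
by exists None => w; split => // hw; apply: h; exists w.
Qed.

End Aux.

Lemma foldl_wpow (S : finType) (T : Type) (f : T -> S -> T) (c : seq S) n s :
  foldl f s (wpow c n) = iter n (fun s => foldl f s c) s.
Proof. by elim: n s => // n IH s; rewrite wpowS foldl_cat IH iterSr. Qed.

Lemma pigeon (T : finType) (h : T -> T) x :
  exists i p, 0 < p /\ iter (i + p) h x = iter i h x.
Proof.
apply: NNPP => H.
pose f (k : 'I_#|T|.+1) := iter k h x.
have inj : injective f.
  move=> k1 k2 e; apply: val_inj => /=; apply/eqP; apply: contraT => ne.
  rewrite /f in e.
  case: (ltngtP k1 k2) ne => // lt _.
    case: H; exists k1, (k2 - k1); split; first lia.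
    by rewrite subnKC ?(ltnW lt).
  case: H; exists k2, (k1 - k2); split; first lia.
  by rewrite subnKC ?(ltnW lt).
by have := leq_card f inj; rewrite card_ord ltnn.
Qed.

Lemma iter_per (T : Type) (h : T -> T) x i p :
  iter (i + p) h x = iter i h x ->
  forall k n, i <= n -> iter (n + k * p) h x = iter n h x.
Proof.
move=> E.
have step n : i <= n -> iter (n + p) h x = iter n h x.
  move=> hn; rewrite (_ : n + p = (n - i) + (i + p)); last by lia.
  by rewrite iterD E -iterD subnK.
elim=> [|k IH] n hn; first by rewrite addn0.
rewrite (_ : n + k.+1 * p = (n + k * p) + p); last by rewrite mulSn; lia.
by rewrite step ?IH //; lia.
Qed.

Theorem proposition2p2 (S : finType) (U V W : seq (seq S)) (L : seq S -> Prop)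
  (hL : forall w, L w -> exists a b c n,
          [/\ a \in U, b \in V, c \in W & w = a ++ wpow c n ++ b]) :
  regular L <->
  (forall a b c, a \in U -> b \in V -> c \in W ->
     fin_union_progressions (fun n => L (a ++ wpow c n ++ b))).
Proof.
split.
- case=> A hA a b c _ _ _.
  pose h s := foldl (@dfa_trans S A) s c.
  pose sn n := iter n h (foldl (@dfa_trans S A) (@dfa_start S A) a).
  pose G s := @dfa_final S A (foldl (@dfa_trans S A) s b).
  have HN n : L (a ++ wpow c n ++ b) <-> G (sn n).
    by rewrite hA /dfa_accept !foldl_cat foldl_wpow.
  have [i [p [p0 Ep]]] := pigeon h (foldl (@dfa_trans S A) (@dfa_start S A) a).
  have per := iter_per Ep.
  exists [seq n <- iota 0 i | dec (L (a ++ wpow c n ++ b))],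
         [seq (r, p) | r <- [seq r <- iota i p | dec (L (a ++ wpow c r ++ b))]].
  move=> n; split.
    move=> Hn; case: (ltnP n i) => hn.
      by left; rewrite mem_filter mem_iota /= add0n hn andbT; apply/decP.
    right; pose r := i + (n - i) %% p; pose t := (n - i) %/ p.
    have hnr : n = r + t * p.
      by rewrite /r /t -addnA [_ + _ * _]addnC -divn_eq subnKC.
    exists (r, p); last by exists t.
    apply: map_f; rewrite mem_filter mem_iota; apply/andP; split.
      apply/decP; apply/HN; rewrite /sn -(per t r) ?leq_addr // -hnr.
      exact/HN.
    by rewrite leq_addr /= ltn_add2l ltn_pmod.
  case=> [|[[r q] /mapP [r' hr' [-> ->]] [t ->]]].
    by rewrite mem_filter => /andP [/decP].
  move: hr'; rewrite mem_filter mem_iota => /andP [/decP hr /andP [hir _]].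
  by apply/HN; rewrite /sn /= per //; apply/HN.
- move=> H.
  pose xs := [seq (a, bc) | a <- U, bc <- [seq (b, c) | b <- V, c <- W]].
  pose Lf (x : seq S * (seq S * seq S)) w :=
    exists n, w = x.1 ++ wpow x.2.2 n ++ x.2.1 /\ L w.
  apply: fres_regular.
  apply: (fres_ext (L := fun w => exists2 x, x \in xs & Lf x w)).
    move=> w; split; first by case=> x _ [n [_ ?]].
    move=> Lw; have [a [b [c [n [ha hb hc ew]]]]] := hL w Lw.
    exists (a, (b, c)); last by exists n.
    by apply: allpairs_f => //; apply: allpairs_f.
  apply: fres_big => x /allpairsP [[a bc] [ha /allpairsP [[b c] [hb hc ebc]] ->]].
  rewrite {}ebc /= in hb hc *.
  have [F [P HFP]] := H a b c ha hb hc.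
  apply: (fres_ext (L := fun w =>
     (exists2 n, n \in F & Kl (a ++ wpow c n) [::] b w) \/
     (exists2 p, p \in P & Kl (a ++ wpow c p.1) (wpow c p.2) b w))).
    move=> w; rewrite /Lf /=; split.
      case=> [[n hn [t ew]]|[p hp [t ew]]].
        exists n; rewrite wpow_nil /= -catA in ew; split => //; subst w.
        by apply/HFP; left.
      exists (p.1 + t * p.2).
      have e' : w = a ++ wpow c (p.1 + t * p.2) ++ b.
        by rewrite ew wpowD wpowM -!catA.
      by split => //; rewrite e'; apply/HFP; right; exists p => //; exists t.
    case=> n [ew Lw]; subst w.
    have := (HFP n).1 Lw; case=> [hF|[p hp [t hnt]]].
      by left; exists n => //; exists 0; rewrite -catA.
    right; exists p => //; exists t.
    by rewrite hnt wpowD wpowM -!catA.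
  by apply: fresU; apply: fres_big => ? _; exact: fresK.
Qed.
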